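(* Let $(A,\mu,E,\Delta,\epsilon)$ be a weak multiplier bialgebra over a field. For all $a,b\in A$, $\overline\sqcap^R(a)\,\overline\sqcap^L(b)=\overline\sqcap^L(b)\,\overline\sqcap^R(a)$ in $\mathbb M(A)$.
   Context: Let $k$ be a field. A non-unital $k$-algebra $A$ is idempotent if its multiplication $\mu$ is surjective and has non-degenerate multiplication if ($ab=0\ \forall a$)$\Rightarrow b=0$ and ($ba=0\ \forall a$)$\Rightarrow b=0$. $\mathbb M(A)$ is its multiplier algebra (pairs $(\lambda,\rho)$ of linear maps $A\to A$ with $a\lambda(b)=\rho(a)b$), a unital algebra containing $A$ as a dense ideal; $A\otimes A\subseteq\mathbb M(A\otimes A)$. Multiplicative $\gamma:A\to\mathbb M(B)$ with idempotent $e\in\mathbb M(B)$, $\langle\gamma(a)b\rangle=eB$, $\langle b\gamma(a)\rangle=Be$ ($\langle\,\rangle$=span) extends uniquely to multiplicative $\overline\gamma:\mathbb M(A)\to\mathbb M(B)$ with $\overline\gamma(1)=e$. A weak multiplier bialgebra: idempotent $A$ with non-degenerate multiplication, idempotent $E\in\mathbb M(A\otimes A)$, multiplicative linear $\Delta:A\to\mathbb M(A\otimes A)$, linear $\epsilon:A\to k$ with: (i) $T_1(a\otimes b):=\Delta(a)(1\otimes b)$, $T_2(a\otimes b):=(a\otimes1)\Delta(b)$ lie in $A\otimes A$; (ii) $(T_2\otimes\mathrm{id})(\mathrm{id}\otimes T_1)=(\mathrm{id}\otimes T_1)(T_2\otimes\mathrm{id})$; (iii) $(\epsilon\otimes\mathrm{id})T_1=\mu=(\mathrm{id}\otimes\epsilon)T_2$;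 (iv) $\langle\Delta(a)(b\otimes b')\rangle=\langle E(b\otimes b')\rangle$, $\langle(b\otimes b')\Delta(a)\rangle=\langle(b\otimes b')E\rangle$; (v) $(E\otimes1)(1\otimes E)=E^{(3)}=(1\otimes E)(E\otimes1)$ with $E^{(3)}:=(\overline{\mathrm{id}\otimes\Delta})(E)=(\overline{\Delta\otimes\mathrm{id}})(E)$; (vi) $(\epsilon\otimes\mathrm{id})((1\otimes a)E(b\otimes c))=(\epsilon\otimes\mathrm{id})(\Delta(a)(b\otimes c))$ and $(\epsilon\otimes\mathrm{id})((a\otimes b)E(1\otimes c))=(\epsilon\otimes\mathrm{id})((a\otimes b)\Delta(c))$. $\overline\sqcap^L(a)\in\mathbb M(A)$ is the multiplier with $\overline\sqcap^L(a)b=(\epsilon\otimes\mathrm{id})((a\otimes1)\Delta(b))$, $b\overline\sqcap^L(a)=(\epsilon\otimes\mathrm{id})((a\otimes b)E)$; $\overline\sqcap^R(a)\in\mathbb M(A)$ is the multiplier with $b\overline\sqcap^R(a)=(\mathrm{id}\otimes\epsilon)(\Delta(b)(1\otimes a))$, $\overline\sqcap^R(a)b=(\mathrm{id}\otimes\epsilon)(E(b\otimes a))$. *)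

(* Defs.v *)
From HB Require Import structures.
From mathcomp Require Import all_boot all_algebra.
Set Implicit Arguments. Unset Strict Implicit. Unset Printing Implicit Defensive.
Import GRing.Theory.
Local Open Scope ring_scope.

Section Tensors.
Variables (k : fieldType) (A : lmodType k).

Definition lfun (f : A -> k) : Prop :=
  forall (c : k) (x y : A), f (c *: x + y) = c * f x + f y.

(** Elements of A⊗A (resp. A⊗A⊗A) are represented by finite sums of simple
    tensors  sum_i x_i ⊗ y_i ; two representations denote the same tensor iff
    they agree against all products of linear functionals (over a field,
    A⊗A embeds into bilinear forms on (dual A) × (dual A)). *)
Definition t2 := seq (A * A).
Definition t3 := seq (A * A * A).

Definition eq2 (s t : t2) : Prop :=
  forall f g, lfun f -> lfun g ->
    \sum_(p <- s) f p.1 * g p.2 = \sum_(p <- t) f p.1 * g p.2.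

Definition eq3 (s t : t3) : Prop :=
  forall f g h, lfun f -> lfun g -> lfun h ->
    \sum_(p <- s) f p.1.1 * g p.1.2 * h p.2 =
    \sum_(p <- t) f p.1.1 * g p.1.2 * h p.2.

Definition scale2 (c : k) (s : t2) : t2 := [seq (c *: p.1, p.2) | p <- s].

Definition ext2 (L : A * A -> t2) (s : t2) : t2 := flatten (map L s).
Definition ext3 (L : A * A * A -> t3) (s : t3) : t3 := flatten (map L s).

Definition bilin2 (L : A * A -> t2) : Prop :=
  (forall c x x' y, eq2 (L (c *: x + x', y)) (scale2 c (L (x, y)) ++ L (x', y))) /\
  (forall c x y y', eq2 (L (x, c *: y + y')) (scale2 c (L (x, y)) ++ L (x, y'))).

Definition span2 (S : t2 -> Prop) (z : t2) : Prop :=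
  exists l : seq (k * t2), (forall q, q \in l -> S q.2) /\
    eq2 z (flatten [seq scale2 q.1 q.2 | q <- l]).

(** multipliers of A⊗A: pairs (λ, ρ) of linear maps A⊗A -> A⊗A, given on
    simple tensors:  λ(x⊗y) = M (x⊗y),  ρ(x⊗y) = (x⊗y) M. *)
Definition M2 := ((A * A -> t2) * (A * A -> t2))%type.
Definition M3 := ((A * A * A -> t3) * (A * A * A -> t3))%type.

Definition eqM2 (M N : M2) : Prop :=
  forall t, eq2 (M.1 t) (N.1 t) /\ eq2 (M.2 t) (N.2 t).
Definition eqM3 (M N : M3) : Prop :=
  forall t, eq3 (M.1 t) (N.1 t) /\ eq3 (M.2 t) (N.2 t).

(** product of multipliers:  (MN)x = M(Nx),  x(MN) = (xM)N *)
Definition mulM2 (M N : M2) : M2 :=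
  (fun t => ext2 M.1 (N.1 t), fun t => ext2 N.2 (M.2 t)).
Definition mulM3 (M N : M3) : M3 :=
  (fun t => ext3 M.1 (N.1 t), fun t => ext3 N.2 (M.2 t)).
Definition addM2 (M N : M2) : M2 :=
  (fun t => M.1 t ++ N.1 t, fun t => M.2 t ++ N.2 t).
Definition scaleM2 (c : k) (M : M2) : M2 :=
  (fun t => scale2 c (M.1 t), fun t => scale2 c (M.2 t)).

Variable (m : A -> A -> A).

Definition mul2 (s t : t2) : t2 := [seq (m p.1 q.1, m p.2 q.2) | p <- s, q <- t].

Definition is_mult2 (M : M2) : Prop :=
  bilin2 M.1 /\ bilin2 M.2 /\
  forall x y : t2, eq2 (mul2 x (ext2 M.1 y)) (mul2 (ext2 M.2 x) y).

Definition elt2 (z : t2) : M2 := (fun t => mul2 z [:: t], fun t => mul2 [:: t] z).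
Definition one_ox (b : A) : M2 :=
  (fun t => [:: (t.1, m b t.2)], fun t => [:: (t.1, m t.2 b)]).
Definition ox_one (a : A) : M2 :=
  (fun t => [:: (m a t.1, t.2)], fun t => [:: (m t.1 a, t.2)]).

Definition Eox1 (E : M2) : M3 :=
  (fun t => [seq (p.1, p.2, t.2) | p <- E.1 t.1],
   fun t => [seq (p.1, p.2, t.2) | p <- E.2 t.1]).
Definition oneoxE (E : M2) : M3 :=
  (fun t => [seq (t.1.1, p.1, p.2) | p <- E.1 (t.1.2, t.2)],
   fun t => [seq (t.1.1, p.1, p.2) | p <- E.2 (t.1.2, t.2)]).

Definition idoxD (D : A -> M2) (w : t2) : M3 :=
  (fun t => flatten [seq [seq (m q.1 t.1.1, p.1, p.2) | p <- (D q.2).1 (t.1.2, t.2)]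
                    | q <- w],
   fun t => flatten [seq [seq (m t.1.1 q.1, p.1, p.2) | p <- (D q.2).2 (t.1.2, t.2)]
                    | q <- w]).
Definition DoxId (D : A -> M2) (w : t2) : M3 :=
  (fun t => flatten [seq [seq (p.1, p.2, m q.2 t.2) | p <- (D q.1).1 t.1] | q <- w],
   fun t => flatten [seq [seq (p.1, p.2, m t.2 q.2) | p <- (D q.1).2 t.1] | q <- w]).

(** [is_ext_value g e mm F]:  F = gbar(mm), where gbar : M(A⊗A) -> M(A⊗A⊗A) is
    the unique multiplicative extension of g with gbar(1) = e.  It is
    characterised by  F e = F = e F,  F g(w) = g(mm w),  g(w) F = g(w mm). *)
Definition is_ext_value (g : t2 -> M3) (e : M3) (mm : M2) (F : M3) : Prop :=
  eqM3 (mulM3 F e) F /\ eqM3 (mulM3 e F) F /\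
  (forall w, eqM3 (mulM3 F (g w)) (g (ext2 mm.1 w))) /\
  (forall w, eqM3 (mulM3 (g w) F) (g (ext2 mm.2 w))).

Definition idoxT (T : A -> A -> t2) (t : A * A * A) : t3 :=
  [seq (t.1.1, p.1, p.2) | p <- T t.1.2 t.2].
Definition Toxid (T : A -> A -> t2) (t : A * A * A) : t3 :=
  [seq (p.1, p.2, t.2) | p <- T t.1.1 t.1.2].

Variable (eps : A -> k).
Definition epsid (s : t2) : A := \sum_(p <- s) eps p.1 *: p.2.
Definition ideps (s : t2) : A := \sum_(p <- s) eps p.2 *: p.1.

End Tensors.

Record WMBA (k : fieldType) (A : lmodType k) := {
  mul : A -> A -> A;
  mulA : forall x y z, mul x (mul y z) = mul (mul x y) z;
  mul_linl : forall (c : k) x x' y, mul (c *: x + x') y = c *: mul x y + mul x' y;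
  mul_linr : forall (c : k) x y y', mul x (c *: y + y') = c *: mul x y + mul x y';
  idempotent : forall a, exists s : t2 A, a = \sum_(p <- s) mul p.1 p.2;
  nondeg_l : forall b, (forall a, mul a b = 0) -> b = 0;
  nondeg_r : forall b, (forall a, mul b a = 0) -> b = 0;
  E : M2 A;
  Delta : A -> M2 A;
  eps : A -> k;
  T1 : A -> A -> t2 A;
  T2 : A -> A -> t2 A;
  E_mult : is_mult2 mul E;
  E_idem : eqM2 (mulM2 E E) E;
  Delta_mult : forall a, is_mult2 mul (Delta a);
  Delta_lin : forall (c : k) a a',
      eqM2 (Delta (c *: a + a')) (addM2 (scaleM2 c (Delta a)) (Delta a'));
  Delta_mul : forall a b, eqM2 (Delta (mul a b)) (mulM2 (Delta a) (Delta b));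
  eps_lin : lfun eps;
  ax_i1 : forall a b, eqM2 (mulM2 (Delta a) (one_ox mul b)) (elt2 mul (T1 a b));
  ax_i2 : forall a b, eqM2 (mulM2 (ox_one mul a) (Delta b)) (elt2 mul (T2 a b));
  ax_ii : forall t, eq3 (ext3 (Toxid T2) (idoxT T1 t)) (ext3 (idoxT T1) (Toxid T2 t));
  ax_iii1 : forall a b, epsid eps (T1 a b) = mul a b;
  ax_iii2 : forall a b, ideps eps (T2 a b) = mul a b;
  ax_iv1 : forall z, span2 (fun w => exists a t, w = (Delta a).1 t) z <->
                     span2 (fun w => exists t, w = E.1 t) z;
  ax_iv2 : forall z, span2 (fun w => exists a t, w = (Delta a).2 t) z <->
                     span2 (fun w => exists t, w = E.2 t) z;
  ax_v_comm : eqM3 (mulM3 (Eox1 E) (oneoxE E)) (mulM3 (oneoxE E) (Eox1 E));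
  ax_v_idD : is_ext_value (idoxD mul Delta) (oneoxE E) E (mulM3 (Eox1 E) (oneoxE E));
  ax_v_Did : is_ext_value (DoxId mul Delta) (Eox1 E) E (mulM3 (Eox1 E) (oneoxE E));
  ax_vi1 : forall a b c,
      epsid eps [seq (p.1, mul a p.2) | p <- E.1 (b, c)] = epsid eps ((Delta a).1 (b, c));
  ax_vi2 : forall a b c,
      epsid eps [seq (p.1, mul p.2 c) | p <- E.2 (a, b)] = epsid eps ((Delta c).2 (a, b))
}.

Section Pi.
Variables (k : fieldType) (A : lmodType k) (W : WMBA A).

(** multipliers of A as pairs (λ, ρ):  λ b = M b,  ρ b = b M *)
Definition M1 := ((A -> A) * (A -> A))%type.
Definition mulM1 (M N : M1) : M1 := (fun b => M.1 (N.1 b), fun b => N.2 (M.2 b)).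

(** ⊓^L(a) b = (ε⊗id)((a⊗1)Δ(b)),  b ⊓^L(a) = (ε⊗id)((a⊗b)E) *)
Definition PiL (a : A) : M1 :=
  (fun b => epsid (eps W) (T2 W a b), fun b => epsid (eps W) ((E W).2 (a, b))).
(** ⊓^R(a) b = (id⊗ε)(E(b⊗a)),  b ⊓^R(a) = (id⊗ε)(Δ(b)(1⊗a)) *)
Definition PiR (a : A) : M1 :=
  (fun b => ideps (eps W) ((E W).1 (b, a)), fun b => ideps (eps W) (T1 W b a)).
End Pi.

(* Main.v *)
Require Import Defs.
From mathcomp Require Import all_boot all_algebra.
From mathcomp Require Import boolp classical_sets.
From Stdlib Require List.
From mathcomp Require Import ring.
Set Implicit Arguments. Unset Strict Implicit. Unset Printing Implicit Defensive.
Import GRing.Theory.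
Local Open Scope ring_scope.


Section LinAlg.
Local Open Scope classical_set_scope.
Variables (k : fieldType) (A : lmodType k).

Lemma lfun0 (f : A -> k) : lfun f -> f 0 = 0.
Proof.
move=> hf; have := hf 1 0 0; rewrite scale1r addr0 mul1r => h.
by apply: (@addrI _ (f 0)); rewrite addr0 -h.
Qed.

Lemma lfunD (f : A -> k) x y : lfun f -> f (x + y) = f x + f y.
Proof. by move=> hf; rewrite -[x in LHS]scale1r hf mul1r. Qed.

Lemma lfunZ (f : A -> k) c x : lfun f -> f (c *: x) = c * f x.
Proof. by move=> hf; rewrite -[c *: x]addr0 hf lfun0 // addr0. Qed.

Lemma lfunN (f : A -> k) x : lfun f -> f (- x) = - f x.
Proof. by move=> hf; rewrite -scaleN1r lfunZ // mulN1r. Qed.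

Lemma lfunB (f : A -> k) x y : lfun f -> f (x - y) = f x - f y.
Proof. by move=> hf; rewrite lfunD // lfunN. Qed.

Lemma lfun_sum (f : A -> k) (T : Type) (s : seq T) (F : T -> A) :
  lfun f -> f (\sum_(p <- s) F p) = \sum_(p <- s) f (F p).
Proof.
move=> hf; elim: s => [|x s IH]; first by rewrite !big_nil lfun0.
by rewrite !big_cons lfunD // IH.
Qed.

Lemma lfun_comb (f : A -> k) (T : Type) (s : seq T) (F : T -> A) (c : T -> k) :
  lfun f -> f (\sum_(p <- s) c p *: F p) = \sum_(p <- s) c p * f (F p).
Proof. by move=> hf; rewrite lfun_sum //; apply: eq_bigr => p _; rewrite lfunZ. Qed.

Definition goodG (G : set (A * k)) :=
  (forall x c d, G (x, c) -> G (x, d) -> c = d) /\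
  (forall (al : k) x y c d, G (x, c) -> G (y, d) -> G (al *: x + y, al * c + d)).

Lemma sep1 (u : A) : u != 0 -> exists f : A -> k, lfun f /\ f u = 1.
Proof.
move=> u0.
pose P (G : set (A * k)) := G = set0 \/ (goodG G /\ G (u, 1)).
have [M [PM Mmax]] : exists M, P M /\ forall B, M `<` B -> ~ P B.
  apply: Zorn_bigcup => F FP Ftot.
  have [[X FX [p Xp]]|none] := pselect (exists2 X, F X & exists p, X p).
  - right.
    have gX : forall Y, F Y -> (exists p, Y p) -> goodG Y /\ Y (u, 1).
      move=> Y FY [q Yq]; case: (FP Y FY) => // Y0.
      by rewrite Y0 in Yq.
    split; last by exists X => //; case: (gX X FX (ex_intro _ p Xp)).
    split.
    + move=> x c d [Y FY Yc] [Z FZ Zd].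
      case: (Ftot Y Z FY FZ) => [YZ|ZY].
      * by have [[g1 _] _] := gX Z FZ (ex_intro _ _ Zd); apply: g1 (YZ _ Yc) Zd.
      * by have [[g1 _] _] := gX Y FY (ex_intro _ _ Yc); apply: g1 Yc (ZY _ Zd).
    + move=> al x y c d [Y FY Yc] [Z FZ Zd].
      case: (Ftot Y Z FY FZ) => [YZ|ZY].
      * have [[_ g2] _] := gX Z FZ (ex_intro _ _ Zd).
        by exists Z => //; apply: g2 (YZ _ Yc) Zd.
      * have [[_ g2] _] := gX Y FY (ex_intro _ _ Yc).
        by exists Y => //; apply: g2 Yc (ZY _ Zd).
  - left; apply/seteqP; split => // p [X FX Xp].
    by apply: none; exists X => //; exists p.
have uinj : forall al be : k, al *: u = be *: u -> al = be.
  move=> al be /eqP; rewrite -subr_eq0 -scalerBl scaler_eq0 (negbTE u0) orbF.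
  by rewrite subr_eq0 => /eqP.
have [gM Mu] : goodG M /\ M (u, 1).
  case: PM => // M0; exfalso.
  pose B0 : set (A * k) := fun p => exists al : k, p = (al *: u, al).
  apply: (Mmax B0).
  + rewrite M0; split; first by [].
    by move=> /(_ (u, 1)); rewrite /B0 /=; apply; exists 1; rewrite scale1r.
  + right; split; last by exists 1; rewrite scale1r.
    split.
    * by move=> x c d [al [-> ->]] [be [/uinj ->]].
    * move=> al x y c d [a1 [-> ->]] [a2 [-> ->]].
      by exists (al * a1 + a2); rewrite scalerDl scalerA.
have [g1 g2] := gM.
have M00 : M (0, 0).
  have := g2 (-1) _ _ _ _ Mu Mu; by rewrite scaleN1r addNr mulN1r addNr.
have tot : forall x, exists c, M (x, c).
  move=> x; apply/not_existsP => nx.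
  pose B : set (A * k) := fun p => exists y d (al : k), M (y, d) /\ p = (y + al *: x, d).
  apply: (Mmax B).
  + split.
    * by move=> [y d] My; exists y, d, 0; rewrite scale0r addr0.
    * move=> MB; apply: (nx 0); apply: MB; exists 0, 0, 1.
      by rewrite scale1r add0r.
  + right; split; last by exists u, 1, 0; rewrite scale0r addr0.
    split.
    * move=> z c d [y [d1 [a1 [My [-> ->]]]]] [y' [d2 [a2 [My' [E1 ->]]]]].
      have [ea|na] := eqVneq a1 a2.
      - move: E1; rewrite ea => /addIr ey; rewrite ey in My.
        exact: g1 My My'.
      - exfalso; apply: (nx ((a1 - a2)^-1 * (- d1 + d2))).
        have eqx : x = (a1 - a2)^-1 *: (- y + y').
          have : (a1 - a2) *: x = - y + y'.
            have -> : y' = y + a1 *: x - a2 *: x by rewrite E1 addrK.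
            by rewrite scalerBl addrA addKr.
          move=> <-; rewrite scalerA mulVf ?scale1r // subr_eq0 //.
        rewrite eqx -[X in M (X, _)]addr0 -[X in M (_, X)]addr0.
        apply: (g2 _ _ _ _ _ _ M00).
        by have := g2 (-1) _ _ _ _ My My'; rewrite scaleN1r mulN1r.
    * move=> al z z' c d [y [d1 [a1 [My [-> ->]]]]] [y' [d2 [a2 [My' [-> ->]]]]].
      exists (al *: y + y'), (al * d1 + d2), (al * a1 + a2); split; first exact: g2.
      by rewrite scalerDr scalerDl !scalerA addrACA.
pose f x := projT1 (cid (tot x)).
have fM : forall x, M (x, f x) by move=> x; rewrite /f; case: cid.
exists f; split.
- by move=> c x y; apply: g1 (fM _) (g2 _ _ _ _ _ (fM x) (fM y)).
- exact: g1 (fM u) Mu.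
Qed.

Lemma sep0 (u : A) : (forall f : A -> k, lfun f -> f u = 0) -> u = 0.
Proof.
move=> h; apply/eqP; apply/negPn/negP => /sep1 [f [hf fu]].
by move: (h f hf); rewrite fu => /eqP; rewrite oner_eq0.
Qed.

Lemma sepeq (u v : A) : (forall f : A -> k, lfun f -> f u = f v) -> u = v.
Proof.
move=> h; apply/eqP; rewrite -subr_eq0; apply/eqP/sep0 => f hf.
by rewrite lfunB // h // subrr.
Qed.

End LinAlg.


Definition allP (T : Type) (P : T -> Prop) (s : seq T) : Prop :=
  foldr (fun q R => P q /\ R) True s.

Section Sys.
Variables (k : fieldType) (A : lmodType k).
Implicit Types (sys : seq (A * (A -> k))).

Definition allL sys := allP (fun q : A * (A -> k) => lfun q.2) sys.
Definition Pr sys (x : A) := x - \sum_(q <- sys) q.2 x *: q.1.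

Lemma sum_lin sys : allL sys -> forall c x y,
  \sum_(q <- sys) q.2 (c *: x + y) *: q.1 =
   c *: \sum_(q <- sys) q.2 x *: q.1 + \sum_(q <- sys) q.2 y *: q.1.
Proof.
move=> hs c x y.
elim: sys hs => [|q sys IH] /=; first by rewrite !big_nil scaler0 addr0.
case=> hq hs; rewrite !big_cons IH // hq scalerDl scalerDr -scalerA.
by rewrite addrACA.
Qed.

Lemma Pr_lin sys : allL sys -> forall c x y, Pr sys (c *: x + y) = c *: Pr sys x + Pr sys y.
Proof.
by move=> hs c x y; rewrite /Pr sum_lin // scalerBr opprD addrACA.
Qed.

Lemma Pr_id sys y : allP (fun q : A * (A -> k) => q.2 y = 0) sys -> Pr sys y = y.
Proof.
move=> h; rewrite /Pr; suff -> : \sum_(q <- sys) q.2 y *: q.1 = 0 by rewrite subr0.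
elim: sys h => [|q sys IH] /=; first by rewrite big_nil.
by case=> hq h; rewrite big_cons hq scale0r add0r IH.
Qed.

Lemma allP_mono (T : Type) (P Q : T -> Prop) s : (forall x, P x -> Q x) -> allP P s -> allP Q s.
Proof. by move=> PQ; elim: s => //= x s IH [/PQ ? ?]; split => //; apply: IH. Qed.

Lemma allP_forall (T : Type) (P : T -> Prop) s : allP P s <-> (forall x, List.In x s -> P x).
Proof.
elim: s => [|x s IH] /=; first by split.
split.
- by move=> [Px /IH h] y [<-|/h].
- by move=> h; split; [apply: h; left | apply/IH => y hy; apply: h; right].
Qed.

Lemma system (xs : seq A) : exists sys, allL sys /\
  allP (fun q : A * (A -> k) => forall x, q.2 (Pr sys x) = 0) sys /\
  (forall x, x \in xs -> Pr sys x = 0).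
Proof.
elim: xs => [|v xs [sys [hL [hI hX]]]]; first by exists [::].
have [w0|wn0] := eqVneq (Pr sys v) 0.
  exists sys; split => //; split => // x; rewrite inE => /orP[/eqP ->|] //.
  exact: hX.
have [f [hf fw]] := sep1 wn0.
set w := Pr sys v in wn0 fw.
pose c x := f (Pr sys x).
have hc : lfun c by move=> a x y; rewrite /c Pr_lin // hf.
have Pr' : forall x, Pr ((w, c) :: sys) x = Pr sys x - c x *: w.
  by move=> x; rewrite /Pr big_cons /= opprD addrA addrAC.
have old : allP (fun q : A * (A -> k) => forall x, q.2 (Pr ((w, c) :: sys) x) = 0) sys.
  apply/allP_forall => q hq x.
  have lq : lfun q.2 by move/allP_forall: hL; apply.
  have iq : forall y, q.2 (Pr sys y) = 0 by move/allP_forall: hI; apply.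
  by rewrite Pr' lfunB // lfunZ // iq /w iq mulr0 subr0.
have newc : forall x, c (Pr ((w, c) :: sys) x) = 0.
  move=> x; rewrite /c Pr_id; last first.
    by move: old; apply: allP_mono.
  by rewrite Pr' lfunB // lfunZ // fw mulr1 /c subrr.
exists ((w, c) :: sys); split; first by split.
split; first by split.
move=> x; rewrite inE => /orP[/eqP ->|hx].
  by rewrite Pr' /c -/w fw scale1r subrr.
by rewrite Pr' /c hX // lfun0 // scale0r subr0.
Qed.
End Sys.


Lemma big_allP (R : nmodType) (T : Type) (P : T -> Prop) (s : seq T) (F G : T -> R) :
  allP P s -> (forall q, P q -> F q = G q) -> \sum_(q <- s) F q = \sum_(q <- s) G q.
Proof.
move=> hs hFG; elim: s hs => [|q s IH] /=; first by rewrite !big_nil.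
by case=> hq hs; rewrite !big_cons hFG // IH.
Qed.

Lemma allP_in (T : eqType) (P : T -> Prop) s : (forall x, x \in s -> P x) -> allP P s.
Proof.
elim: s => //= x s IH h; split; first by apply: h; rewrite inE eqxx.
by apply: IH => y hy; apply: h; rewrite inE hy orbT.
Qed.

Section Univ.
Variables (k : fieldType) (A : lmodType k).
Implicit Types (sys : seq (A * (A -> k))).

Definition bil (phi : A -> A -> k) := (forall y, lfun (phi^~ y)) /\ (forall x, lfun (phi x)).
Definition tril (phi : A -> A -> A -> k) :=
  [/\ forall y z, lfun (fun x => phi x y z), forall x z, lfun (fun y => phi x y z)
   & forall x y, lfun (phi x y)].

Definition T2f (f g : A -> k) (t : t2 A) := \sum_(p <- t) f p.1 * g p.2.
Definition T3f (f g h : A -> k) (t : t3 A) := \sum_(p <- t) f p.1.1 * g p.1.2 * h p.2.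

Lemma big_sys sys (F G : A * (A -> k) -> k) : allL sys ->
  (forall q, lfun q.2 -> F q = G q) -> \sum_(q <- sys) F q = \sum_(q <- sys) G q.
Proof. exact: big_allP. Qed.

Lemma expand sys (psi : A -> k) x : allL sys -> Pr sys x = 0 -> lfun psi ->
  psi x = \sum_(q <- sys) q.2 x * psi q.1.
Proof.
move=> hs /eqP; rewrite subr_eq0 => /eqP {1}-> hpsi.
by rewrite lfun_comb.
Qed.

Lemma expand2 sys phi t : allL sys -> bil phi ->
  allP (fun p : A * A => Pr sys p.1 = 0 /\ Pr sys p.2 = 0) t ->
  \sum_(p <- t) phi p.1 p.2 =
  \sum_(q <- sys) \sum_(r <- sys) phi q.1 r.1 * T2f q.2 r.2 t.
Proof.
move=> hs [h1 h2]; elim: t => [|p t IH] /=.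
  by move=> _; rewrite big_nil; symmetry; apply: big1 => q _; apply: big1 => r _;
     rewrite /T2f big_nil mulr0.
case=> [[p1 p2] ht]; rewrite big_cons IH //.
have -> : phi p.1 p.2 = \sum_(q <- sys) \sum_(r <- sys) phi q.1 r.1 * (q.2 p.1 * r.2 p.2).
  rewrite (expand (psi := phi^~ p.2) hs p1 (h1 _)).
  apply: (big_sys hs) => q hq; rewrite (expand hs p2 (h2 _)) mulr_sumr.
  by apply: (big_sys hs) => r hr; ring.
rewrite -big_split /=; apply: eq_bigr => q _; rewrite -big_split /=.
by apply: eq_bigr => r _; rewrite /T2f big_cons mulrDr.
Qed.

Lemma expand3 sys phi t : allL sys -> tril phi ->
  allP (fun p : A * A * A => [/\ Pr sys p.1.1 = 0, Pr sys p.1.2 = 0 & Pr sys p.2 = 0]) t ->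
  \sum_(p <- t) phi p.1.1 p.1.2 p.2 =
  \sum_(q <- sys) \sum_(r <- sys) \sum_(l <- sys) phi q.1 r.1 l.1 * T3f q.2 r.2 l.2 t.
Proof.
move=> hs [h1 h2 h3]; elim: t => [|p t IH] /=.
  by move=> _; rewrite big_nil; symmetry; apply: big1 => q _; apply: big1 => r _;
     apply: big1 => l _; rewrite /T3f big_nil mulr0.
case=> [[p1 p2 p3] ht]; rewrite big_cons IH //.
have -> : phi p.1.1 p.1.2 p.2 = \sum_(q <- sys) \sum_(r <- sys) \sum_(l <- sys)
     phi q.1 r.1 l.1 * (q.2 p.1.1 * r.2 p.1.2 * l.2 p.2).
  rewrite (expand (psi := fun x => phi x p.1.2 p.2) hs p1 (h1 _ _)).
  apply: (big_sys hs) => q hq.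
  rewrite (expand (psi := fun y => phi q.1 y p.2) hs p2 (h2 _ _)) mulr_sumr.
  apply: (big_sys hs) => r hr.
  rewrite (expand hs p3 (h3 _ _)) !mulr_sumr.
  apply: (big_sys hs) => l hl.
  by ring.
rewrite -big_split /=; apply: eq_bigr => q _; rewrite -big_split /=.
apply: eq_bigr => r _; rewrite -big_split /=.
by apply: eq_bigr => l _; rewrite /T3f big_cons mulrDr.
Qed.

Lemma U2 (s s' : t2 A) phi : eq2 s s' -> bil phi ->
  \sum_(p <- s) phi p.1 p.2 = \sum_(p <- s') phi p.1 p.2.
Proof.
move=> e hphi.
have [sys [hL [_ hX]]] := system ([seq p.1 | p <- s] ++ [seq p.2 | p <- s] ++
                                  [seq p.1 | p <- s'] ++ [seq p.2 | p <- s']).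
rewrite (expand2 hL hphi) ?(expand2 hL hphi _ (t := s')).
- apply: (big_sys hL) => q hq; apply: (big_sys hL) => r hr.
  by rewrite /T2f e.
- by apply: allP_in => p hp; split; apply: hX; rewrite !mem_cat (map_f _ hp) ?orbT.
- by apply: allP_in => p hp; split; apply: hX; rewrite !mem_cat (map_f _ hp) ?orbT.
Qed.

Lemma U3 (s s' : t3 A) phi : eq3 s s' -> tril phi ->
  \sum_(p <- s) phi p.1.1 p.1.2 p.2 = \sum_(p <- s') phi p.1.1 p.1.2 p.2.
Proof.
move=> e hphi.
have [sys [hL [_ hX]]] := system ([seq p.1.1 | p <- s] ++ [seq p.1.2 | p <- s] ++
   [seq p.2 | p <- s] ++
   [seq p.1.1 | p <- s'] ++ [seq p.1.2 | p <- s'] ++ [seq p.2 | p <- s']).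
rewrite (expand3 hL hphi) ?(expand3 hL hphi _ (t := s')).
- apply: (big_sys hL) => q hq; apply: (big_sys hL) => r hr; apply: (big_sys hL) => l hl.
  by rewrite /T3f e.
- by apply: allP_in => p hp; split; apply: hX; rewrite !mem_cat (map_f _ hp) ?orbT.
- by apply: allP_in => p hp; split; apply: hX; rewrite !mem_cat (map_f _ hp) ?orbT.
Qed.
End Univ.


Section Tens.
Variables (k : fieldType) (A : lmodType k).
Implicit Types (f g h : A -> k) (s : t2 A) (u : t3 A).

Lemma T2f_ext f f' g g' s : f =1 f' -> g =1 g' -> T2f f g s = T2f f' g' s.
Proof. by move=> ef eg; apply: eq_bigr => p _; rewrite ef eg. Qed.
Lemma T3f_ext f f' g g' h h' u : f =1 f' -> g =1 g' -> h =1 h' -> T3f f g h u = T3f f' g' h' u.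
Proof. by move=> ef eg eh; apply: eq_bigr => p _; rewrite ef eg eh. Qed.

Lemma T2f_cat f g s s' : T2f f g (s ++ s') = T2f f g s + T2f f g s'.
Proof. by rewrite /T2f big_cat. Qed.
Lemma T3f_cat f g h u u' : T3f f g h (u ++ u') = T3f f g h u + T3f f g h u'.
Proof. by rewrite /T3f big_cat. Qed.
Lemma T2f_nil f g : T2f f g [::] = 0. Proof. by rewrite /T2f big_nil. Qed.
Lemma T3f_nil f g h : T3f f g h [::] = 0. Proof. by rewrite /T3f big_nil. Qed.

Lemma T2f_flat f g (T : Type) (l : seq T) (L : T -> t2 A) :
  T2f f g (flatten (map L l)) = \sum_(x <- l) T2f f g (L x).
Proof. by rewrite /T2f big_flatten /= big_map. Qed.
Lemma T3f_flat f g h (T : Type) (l : seq T) (L : T -> t3 A) :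
  T3f f g h (flatten (map L l)) = \sum_(x <- l) T3f f g h (L x).
Proof. by rewrite /T3f big_flatten /= big_map. Qed.

Lemma T2f_map f g (T : Type) (l : seq T) (F : T -> A * A) :
  T2f f g (map F l) = \sum_(x <- l) f (F x).1 * g (F x).2.
Proof. by rewrite /T2f big_map. Qed.
Lemma T3f_map f g h (T : Type) (l : seq T) (F : T -> A * A * A) :
  T3f f g h (map F l) = \sum_(x <- l) f (F x).1.1 * g (F x).1.2 * h (F x).2.
Proof. by rewrite /T3f big_map. Qed.

Lemma T2f_scale f g c s : lfun f -> T2f f g (scale2 c s) = c * T2f f g s.
Proof.
move=> hf; rewrite /scale2 T2f_map /T2f mulr_sumr; apply: eq_bigr => p _.
by rewrite lfunZ // mulrA.
Qed.

Lemma eq2E s s' : eq2 s s' <-> forall f g, lfun f -> lfun g -> T2f f g s = T2f f g s'.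
Proof. by []. Qed.
Lemma eq3E u u' : eq3 u u' <-> forall f g h, lfun f -> lfun g -> lfun h -> T3f f g h u = T3f f g h u'.
Proof. by []. Qed.

Lemma bil_of (L : A * A -> t2 A) f g : bilin2 L -> lfun f -> lfun g ->
  bil (fun y z => T2f f g (L (y, z))).
Proof.
move=> [h1 h2] hf hg; split.
- move=> z c x x' /=; transitivity (T2f f g (scale2 c (L (x, z)) ++ L (x', z))).
    exact: h1.
  by rewrite T2f_cat T2f_scale.
- move=> x c z z' /=; transitivity (T2f f g (scale2 c (L (x, z)) ++ L (x, z'))).
    exact: h2.
  by rewrite T2f_cat T2f_scale.
Qed.

Variable (m : A -> A -> A).
Hypothesis mul_linl : forall (c : k) x x' y, m (c *: x + x') y = c *: m x y + m x' y.
Hypothesis mul_linr : forall (c : k) x y y', m x (c *: y + y') = c *: m x y + m x y'.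
Hypothesis nondeg_l : forall b, (forall a, m a b = 0) -> b = 0.
Hypothesis nondeg_r : forall b, (forall a, m b a = 0) -> b = 0.

Definition fr f (t : A) := fun x => f (m x t).
Definition fl (t : A) f := fun x => f (m t x).
Lemma lfun_fr f t : lfun f -> lfun (fr f t).
Proof. by move=> hf c x y; rewrite /fr mul_linl hf. Qed.
Lemma lfun_fl f t : lfun f -> lfun (fl t f).
Proof. by move=> hf c x y; rewrite /fl mul_linr hf. Qed.

Lemma T2f_mulr f g s t : T2f f g (mul2 m s [:: t]) = T2f (fr f t.1) (fr g t.2) s.
Proof.
rewrite /mul2 T2f_flat /T2f; apply: eq_bigr => p _.
by rewrite /= big_cons big_nil addr0.
Qed.
Lemma T2f_mull f g t s : T2f f g (mul2 m [:: t] s) = T2f (fl t.1 f) (fl t.2 g) s.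
Proof. by rewrite /mul2 /= cats0 T2f_map. Qed.

Lemma cancel_r (T : Type) (s s' : seq T) (x x' : T -> A) (c c' : T -> k) :
  (forall f, lfun f -> forall t, \sum_(p <- s) c p * f (m (x p) t) = \sum_(p <- s') c' p * f (m (x' p) t)) ->
  forall f, lfun f -> \sum_(p <- s) c p * f (x p) = \sum_(p <- s') c' p * f (x' p).
Proof.
move=> H.
pose v := \sum_(p <- s) c p *: x p - \sum_(p <- s') c' p *: x' p.
have mv : forall t, m v t = 0.
  move=> t; apply: sep0 => f hf; change (fr f t v = 0); rewrite /v.
  rewrite (lfunB _ _ (lfun_fr t hf)) !(lfun_comb _ _ _ (lfun_fr t hf)).
  by rewrite /fr H // subrr.
have v0 : v = 0 by apply: nondeg_r.
move=> f hf; apply/eqP; rewrite -subr_eq0 -!(lfun_comb _ _ _ hf) -lfunB // -/v v0.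
by rewrite lfun0.
Qed.

Lemma cancel_l (T : Type) (s s' : seq T) (x x' : T -> A) (c c' : T -> k) :
  (forall f, lfun f -> forall t, \sum_(p <- s) c p * f (m t (x p)) = \sum_(p <- s') c' p * f (m t (x' p))) ->
  forall f, lfun f -> \sum_(p <- s) c p * f (x p) = \sum_(p <- s') c' p * f (x' p).
Proof.
move=> H.
pose v := \sum_(p <- s) c p *: x p - \sum_(p <- s') c' p *: x' p.
have mv : forall t, m t v = 0.
  move=> t; apply: sep0 => f hf; change (fl t f v = 0); rewrite /v.
  rewrite (lfunB _ _ (lfun_fl t hf)) !(lfun_comb _ _ _ (lfun_fl t hf)).
  by rewrite /fl H // subrr.
have v0 : v = 0 by apply: nondeg_l.
move=> f hf; apply/eqP; rewrite -subr_eq0 -!(lfun_comb _ _ _ hf) -lfunB // -/v v0.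
by rewrite lfun0.
Qed.

Lemma nondeg2r s s' :
  (forall t f g, lfun f -> lfun g -> T2f (fr f t.1) (fr g t.2) s = T2f (fr f t.1) (fr g t.2) s') ->
  forall f g, lfun f -> lfun g -> T2f f g s = T2f f g s'.
Proof.
move=> H f g hf hg.
have stepA : forall g', lfun g' -> forall t2, T2f f (fr g' t2) s = T2f f (fr g' t2) s'.
  move=> g' hg' t2.
  have h := @cancel_r _ s s' (fun p => p.1) (fun p => p.1)
    (fun p => fr g' t2 p.2) (fun p => fr g' t2 p.2).
  transitivity (\sum_(p <- s) fr g' t2 p.2 * f p.1).
    by apply: eq_bigr => p _; rewrite mulrC.
  transitivity (\sum_(p <- s') fr g' t2 p.2 * f p.1); last first.
    by apply: eq_bigr => p _; rewrite mulrC.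
  apply: h hf => f' hf' t1.
  have := H (t1, t2) f' g' hf' hg'; rewrite /T2f /= => e.
  transitivity (\sum_(p <- s) fr f' t1 p.1 * fr g' t2 p.2).
    by apply: eq_bigr => p _; rewrite mulrC.
  rewrite e; by apply: eq_bigr => p _; rewrite mulrC.
have h := @cancel_r _ s s' (fun p => p.2) (fun p => p.2)
    (fun p => f p.1) (fun p => f p.1).
by apply: h hg => g' hg' t2; apply: stepA.
Qed.

Lemma nondeg2l s s' :
  (forall t f g, lfun f -> lfun g -> T2f (fl t.1 f) (fl t.2 g) s = T2f (fl t.1 f) (fl t.2 g) s') ->
  forall f g, lfun f -> lfun g -> T2f f g s = T2f f g s'.
Proof.
move=> H f g hf hg.
have stepA : forall g', lfun g' -> forall t2, T2f f (fl t2 g') s = T2f f (fl t2 g') s'.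
  move=> g' hg' t2.
  have h := @cancel_l _ s s' (fun p => p.1) (fun p => p.1)
    (fun p => fl t2 g' p.2) (fun p => fl t2 g' p.2).
  transitivity (\sum_(p <- s) fl t2 g' p.2 * f p.1).
    by apply: eq_bigr => p _; rewrite mulrC.
  transitivity (\sum_(p <- s') fl t2 g' p.2 * f p.1); last first.
    by apply: eq_bigr => p _; rewrite mulrC.
  apply: h hf => f' hf' t1.
  have := H (t1, t2) f' g' hf' hg'; rewrite /T2f /= => e.
  transitivity (\sum_(p <- s) fl t1 f' p.1 * fl t2 g' p.2).
    by apply: eq_bigr => p _; rewrite mulrC.
  rewrite e; by apply: eq_bigr => p _; rewrite mulrC.
have h := @cancel_l _ s s' (fun p => p.2) (fun p => p.2)
    (fun p => f p.1) (fun p => f p.1).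
by apply: h hg => g' hg' t2; apply: stepA.
Qed.

Lemma nondeg3r u u' :
  (forall t f g h, lfun f -> lfun g -> lfun h ->
     T3f (fr f t.1.1) (fr g t.1.2) (fr h t.2) u = T3f (fr f t.1.1) (fr g t.1.2) (fr h t.2) u') ->
  forall f g h, lfun f -> lfun g -> lfun h -> T3f f g h u = T3f f g h u'.
Proof.
move=> H f g h hf hg hh.
have step1 : forall g' h', lfun g' -> lfun h' -> forall t2 t3,
    T3f f (fr g' t2) (fr h' t3) u = T3f f (fr g' t2) (fr h' t3) u'.
  move=> g' h' hg' hh' t2 t3.
  have c := @cancel_r _ u u' (fun p => p.1.1) (fun p => p.1.1)
    (fun p => fr g' t2 p.1.2 * fr h' t3 p.2) (fun p => fr g' t2 p.1.2 * fr h' t3 p.2).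
  rewrite /T3f.
  transitivity (\sum_(p <- u) (fr g' t2 p.1.2 * fr h' t3 p.2) * f p.1.1).
    by apply: eq_bigr => p _; ring.
  transitivity (\sum_(p <- u') (fr g' t2 p.1.2 * fr h' t3 p.2) * f p.1.1); last first.
    by apply: eq_bigr => p _; ring.
  apply: c hf => f' hf' t1.
  have := H (t1, t2, t3) f' g' h' hf' hg' hh'; rewrite /T3f /= => e.
  transitivity (\sum_(p <- u) fr f' t1 p.1.1 * fr g' t2 p.1.2 * fr h' t3 p.2).
    by apply: eq_bigr => p _; rewrite /fr; ring.
  rewrite e; by apply: eq_bigr => p _; rewrite /fr; ring.
have step2 : forall h', lfun h' -> forall t3,
    T3f f g (fr h' t3) u = T3f f g (fr h' t3) u'.
  move=> h' hh' t3.
  have c := @cancel_r _ u u' (fun p => p.1.2) (fun p => p.1.2)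
    (fun p => f p.1.1 * fr h' t3 p.2) (fun p => f p.1.1 * fr h' t3 p.2).
  rewrite /T3f.
  transitivity (\sum_(p <- u) (f p.1.1 * fr h' t3 p.2) * g p.1.2).
    by apply: eq_bigr => p _; ring.
  transitivity (\sum_(p <- u') (f p.1.1 * fr h' t3 p.2) * g p.1.2); last first.
    by apply: eq_bigr => p _; ring.
  apply: c hg => g' hg' t2.
  have := step1 g' h' hg' hh' t2 t3; rewrite /T3f /= => e.
  transitivity (\sum_(p <- u) f p.1.1 * fr g' t2 p.1.2 * fr h' t3 p.2).
    by apply: eq_bigr => p _; rewrite /fr; ring.
  rewrite e; by apply: eq_bigr => p _; rewrite /fr; ring.
have c := @cancel_r _ u u' (fun p => p.2) (fun p => p.2)
    (fun p => f p.1.1 * g p.1.2) (fun p => f p.1.1 * g p.1.2).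
by apply: c hh => h' hh' t3; apply: step2.
Qed.

Lemma nondeg3l u u' :
  (forall t f g h, lfun f -> lfun g -> lfun h ->
     T3f (fl t.1.1 f) (fl t.1.2 g) (fl t.2 h) u = T3f (fl t.1.1 f) (fl t.1.2 g) (fl t.2 h) u') ->
  forall f g h, lfun f -> lfun g -> lfun h -> T3f f g h u = T3f f g h u'.
Proof.
move=> H f g h hf hg hh.
have step1 : forall g' h', lfun g' -> lfun h' -> forall t2 t3,
    T3f f (fl t2 g') (fl t3 h') u = T3f f (fl t2 g') (fl t3 h') u'.
  move=> g' h' hg' hh' t2 t3.
  have c := @cancel_l _ u u' (fun p => p.1.1) (fun p => p.1.1)
    (fun p => fl t2 g' p.1.2 * fl t3 h' p.2) (fun p => fl t2 g' p.1.2 * fl t3 h' p.2).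
  rewrite /T3f.
  transitivity (\sum_(p <- u) (fl t2 g' p.1.2 * fl t3 h' p.2) * f p.1.1).
    by apply: eq_bigr => p _; ring.
  transitivity (\sum_(p <- u') (fl t2 g' p.1.2 * fl t3 h' p.2) * f p.1.1); last first.
    by apply: eq_bigr => p _; ring.
  apply: c hf => f' hf' t1.
  have := H (t1, t2, t3) f' g' h' hf' hg' hh'; rewrite /T3f /= => e.
  transitivity (\sum_(p <- u) fl t1 f' p.1.1 * fl t2 g' p.1.2 * fl t3 h' p.2).
    by apply: eq_bigr => p _; rewrite /fl; ring.
  rewrite e; by apply: eq_bigr => p _; rewrite /fl; ring.
have step2 : forall h', lfun h' -> forall t3,
    T3f f g (fl t3 h') u = T3f f g (fl t3 h') u'.
  move=> h' hh' t3.
  have c := @cancel_l _ u u' (fun p => p.1.2) (fun p => p.1.2)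
    (fun p => f p.1.1 * fl t3 h' p.2) (fun p => f p.1.1 * fl t3 h' p.2).
  rewrite /T3f.
  transitivity (\sum_(p <- u) (f p.1.1 * fl t3 h' p.2) * g p.1.2).
    by apply: eq_bigr => p _; ring.
  transitivity (\sum_(p <- u') (f p.1.1 * fl t3 h' p.2) * g p.1.2); last first.
    by apply: eq_bigr => p _; ring.
  apply: c hg => g' hg' t2.
  have := step1 g' h' hg' hh' t2 t3; rewrite /T3f /= => e.
  transitivity (\sum_(p <- u) f p.1.1 * fl t2 g' p.1.2 * fl t3 h' p.2).
    by apply: eq_bigr => p _; rewrite /fl; ring.
  rewrite e; by apply: eq_bigr => p _; rewrite /fl; ring.
have c := @cancel_l _ u u' (fun p => p.2) (fun p => p.2)
    (fun p => f p.1.1 * g p.1.2) (fun p => f p.1.1 * g p.1.2).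
by apply: c hh => h' hh' t3; apply: step2.
Qed.

End Tens.


Section WM.
Variables (k : fieldType) (A : lmodType k) (W : WMBA A).
Local Notation m := (Defs.mul W).
Local Notation ep := (Defs.eps W).
Local Notation EE := (Defs.E W).
Local Notation DD := (Defs.Delta W).
Implicit Types (f g h : A -> k).

Let hep : lfun ep := eps_lin W.
Let frL f t : lfun f -> lfun (fr m f t) := @lfun_fr _ _ _ (mul_linl W) f t.
Let flL f t : lfun f -> lfun (fl m t f) := @lfun_fl _ _ _ (mul_linr W) f t.
Let ND2r := nondeg2r (mul_linl W) (@nondeg_r _ _ W).
Let ND2l := nondeg2l (mul_linr W) (@nondeg_l _ _ W).
Let ND3r := nondeg3r (mul_linl W) (@nondeg_r _ _ W).
Let ND3l := nondeg3l (mul_linr W) (@nondeg_l _ _ W).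

Lemma bilE1 f g : lfun f -> lfun g -> bil (fun y z => T2f f g (EE.1 (y, z))).
Proof. by apply: bil_of; case: (E_mult W). Qed.
Lemma bilE2 f g : lfun f -> lfun g -> bil (fun y z => T2f f g (EE.2 (y, z))).
Proof. by apply: bil_of; case: (E_mult W) => _ []. Qed.

Lemma ext2_1 (L : A * A -> t2 A) w : ext2 L [:: w] = L w.
Proof. by rewrite /ext2 /= cats0. Qed.

Lemma Emid f g t w : lfun f -> lfun g ->
  T2f (fl m t.1 f) (fl m t.2 g) (EE.1 w) = T2f (fr m f w.1) (fr m g w.2) (EE.2 t).
Proof.
move=> hf hg; case: (E_mult W) => _ [_ H].
have := H [:: t] [:: w] f g hf hg; rewrite !ext2_1 -/(T2f f g _) -/(T2f f g _).
by rewrite T2f_mull T2f_mulr.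
Qed.

Lemma Eright f g t y z : lfun f -> lfun g ->
  T2f (fr m f t.1) (fr m g t.2) (EE.1 (y, z)) = T2f f g (EE.1 (m y t.1, m z t.2)).
Proof.
move=> hf hg; rewrite -T2f_mulr; apply: ND2l hf hg => t' F G hF hG.
rewrite T2f_mulr.
rewrite (@T2f_ext _ _ _ (fl m t'.1 (fr m F t.1)) _ (fl m t'.2 (fr m G t.2))); last 2 first.
- by move=> x; rewrite /fr /fl (@Defs.mulA _ _ W).
- by move=> x; rewrite /fr /fl (@Defs.mulA _ _ W).
have ? := frL t.1 hF; have ? := frL t.2 hG.
rewrite !Emid //=; rewrite /T2f; apply: eq_bigr => p _; by rewrite /fr -!(@Defs.mulA _ _ W).
Qed.

Lemma Eleft f g t y z : lfun f -> lfun g ->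
  T2f (fl m t.1 f) (fl m t.2 g) (EE.2 (y, z)) = T2f f g (EE.2 (m t.1 y, m t.2 z)).
Proof.
move=> hf hg; rewrite -T2f_mull; apply: ND2r hf hg => w F G hF hG.
rewrite T2f_mull.
rewrite (@T2f_ext _ _ _ (fr m (fl m t.1 F) w.1) _ (fr m (fl m t.2 G) w.2)); last 2 first.
- by move=> x; rewrite /fr /fl (@Defs.mulA _ _ W).
- by move=> x; rewrite /fr /fl (@Defs.mulA _ _ W).
have ? := flL t.1 hF; have ? := flL t.2 hG.
rewrite -!Emid //=; rewrite /T2f; apply: eq_bigr => p _; by rewrite /fl !(@Defs.mulA _ _ W).
Qed.

Lemma T2f_ext2 (L : A * A -> t2 A) s f g : T2f f g (ext2 L s) = \sum_(p <- s) T2f f g (L p).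
Proof. exact: T2f_flat. Qed.
Lemma T3f_ext3 (L : A * A * A -> t3 A) u f g h : T3f f g h (ext3 L u) = \sum_(p <- u) T3f f g h (L p).
Proof. exact: T3f_flat. Qed.
Lemma T2f_1 f g (p : A * A) : T2f f g [:: p] = f p.1 * g p.2.
Proof. by rewrite /T2f big_cons big_nil addr0. Qed.

Lemma EDelta1 x t f g : lfun f -> lfun g ->
  T2f f g (ext2 EE.1 ((DD x).1 t)) = T2f f g ((DD x).1 t).
Proof.
move=> hf hg; set z := (DD x).1 t.
have sp : span2 (fun w => exists a t, w = (DD a).1 t) z.
  exists [:: (1, z)]; split.
    by move=> q; rewrite mem_seq1 => /eqP -> /=; exists x, t.
  move=> f' g' hf' hg' /=; rewrite cats0.
  by rewrite -/(T2f f' g' _) -/(T2f f' g' _) T2f_scale // mul1r.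
have [l [hl el]] := (proj1 (ax_iv1 W z) sp).
have [b1 b2] := bilE1 hf hg.
rewrite T2f_ext2.
transitivity (\sum_(p <- z) T2f f g (EE.1 (p.1, p.2))).
  by apply: eq_bigr => -[].
rewrite (U2 el (bilE1 hf hg)) big_flatten /= big_map.
have el' : T2f f g z = T2f f g (flatten [seq scale2 q.1 q.2 | q <- l]) := el f g hf hg.
rewrite el' T2f_flat.
apply: eq_big_seq => q hq; rewrite big_map T2f_scale // mulr_sumr.
have [tq ->] := hl q hq.
have := (E_idem W tq).1 f g hf hg; rewrite /= -/(T2f f g _) -/(T2f f g _) T2f_ext2 => H.
transitivity (q.1 * \sum_(p <- EE.1 tq) T2f f g (EE.1 p)).
  rewrite mulr_sumr; apply: eq_bigr => -[p1 p2] _ /=.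
  have := b1 p2 q.1 p1 0; rewrite /= addr0 => ->.
  by rewrite (lfun0 (b1 p2)) addr0.
by rewrite H /T2f mulr_sumr.
Qed.

Lemma EDelta2 x t f g : lfun f -> lfun g ->
  T2f f g (ext2 EE.2 ((DD x).2 t)) = T2f f g ((DD x).2 t).
Proof.
move=> hf hg; set z := (DD x).2 t.
have sp : span2 (fun w => exists a t, w = (DD a).2 t) z.
  exists [:: (1, z)]; split.
    by move=> q; rewrite mem_seq1 => /eqP -> /=; exists x, t.
  move=> f' g' hf' hg' /=; rewrite cats0.
  by rewrite -/(T2f f' g' _) -/(T2f f' g' _) T2f_scale // mul1r.
have [l [hl el]] := (proj1 (ax_iv2 W z) sp).
have [b1 b2] := bilE2 hf hg.
rewrite T2f_ext2.
transitivity (\sum_(p <- z) T2f f g (EE.2 (p.1, p.2))).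
  by apply: eq_bigr => -[].
rewrite (U2 el (bilE2 hf hg)) big_flatten /= big_map.
have el' : T2f f g z = T2f f g (flatten [seq scale2 q.1 q.2 | q <- l]) := el f g hf hg.
rewrite el' T2f_flat.
apply: eq_big_seq => q hq; rewrite big_map T2f_scale // mulr_sumr.
have [tq ->] := hl q hq.
have := (E_idem W tq).2 f g hf hg; rewrite /= -/(T2f f g _) -/(T2f f g _) T2f_ext2 => H.
transitivity (q.1 * \sum_(p <- EE.2 tq) T2f f g (EE.2 p)).
  rewrite mulr_sumr; apply: eq_bigr => -[p1 p2] _ /=.
  have := b1 p2 q.1 p1 0; rewrite /= addr0 => ->.
  by rewrite (lfun0 (b1 p2)) addr0.
by rewrite H /T2f mulr_sumr.
Qed.


Lemma T2ax b w t f g : lfun f -> lfun g ->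
  T2f (fr m f t.1) (fr m g t.2) (T2 W b w) = T2f (fl m b f) g ((DD w).1 t).
Proof.
move=> hf hg; rewrite -T2f_mulr.
have := (@ax_i2 _ _ W b w t).1 f g hf hg; rewrite /= -/(T2f f g _) -/(T2f f g _) => <-.
by rewrite T2f_ext2 /T2f; apply: eq_bigr => p _; rewrite big_cons big_nil addr0.
Qed.

Lemma T1ax w a t f g : lfun f -> lfun g ->
  T2f (fl m t.1 f) (fl m t.2 g) (T1 W w a) = T2f f (fr m g a) ((DD w).2 t).
Proof.
move=> hf hg; rewrite -T2f_mull.
have := (@ax_i1 _ _ W w a t).2 f g hf hg; rewrite /= -/(T2f f g _) -/(T2f f g _) => <-.
by rewrite T2f_ext2 /T2f; apply: eq_bigr => p _; rewrite big_cons big_nil addr0.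
Qed.

Lemma T2lin b f g : lfun f -> lfun g -> lfun (fun w => T2f f g (T2 W b w)).
Proof.
move=> hf hg c w w' /=.
transitivity (T2f f g (scale2 c (T2 W b w) ++ T2 W b w')); last by rewrite T2f_cat T2f_scale.
apply: ND2r hf hg => t F G hF hG.
have ? := frL t.1 hF; have ? := frL t.2 hG; have ? := flL b hF.
rewrite T2f_cat T2f_scale // (T2ax _ _ _ hF hG) (T2ax _ _ _ hF hG) (T2ax _ _ _ hF hG).
have := (Delta_lin W c w w' t).1 (fl m b F) G (flL b hF) hG.
by rewrite /= -/(T2f _ _ _) -/(T2f _ _ _) T2f_cat T2f_scale ?flL.
Qed.

Lemma T1lin a f g : lfun f -> lfun g -> lfun (fun w => T2f f g (T1 W w a)).
Proof.
move=> hf hg c w w' /=.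
transitivity (T2f f g (scale2 c (T1 W w a) ++ T1 W w' a)); last by rewrite T2f_cat T2f_scale.
apply: ND2l hf hg => t F G hF hG.
have ? := flL t.1 hF; have ? := flL t.2 hG; have ? := frL a hG.
rewrite T2f_cat T2f_scale // (T1ax _ _ _ hF hG) (T1ax _ _ _ hF hG) (T1ax _ _ _ hF hG).
have := (Delta_lin W c w w' t).2 F (fr m G a) hF (frL a hG).
by rewrite /= -/(T2f _ _ _) -/(T2f _ _ _) T2f_cat T2f_scale.
Qed.

End WM.


Section Nest.
Variables (k : fieldType) (A : lmodType k).
Implicit Types (f g h : A -> k).

Lemma T3f_nest1 (T : Type) (l : seq T) (e : T -> A) (L : T -> t2 A) f g h :
  T3f f g h (flatten [seq [seq (e p, q.1, q.2) | q <- L p] | p <- l]) =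
  \sum_(p <- l) f (e p) * T2f g h (L p).
Proof.
rewrite T3f_flat; apply: eq_bigr => p _; rewrite T3f_map /T2f mulr_sumr.
by apply: eq_bigr => q _ /=; rewrite mulrA.
Qed.

Lemma T3f_nest2 (T : Type) (l : seq T) (e : T -> A) (L : T -> t2 A) f g h :
  T3f f g h (flatten [seq [seq (p.1, p.2, e q) | p <- L q] | q <- l]) =
  \sum_(q <- l) T2f f g (L q) * h (e q).
Proof.
rewrite T3f_flat; apply: eq_bigr => p _; rewrite T3f_map /T2f mulr_suml.
by apply: eq_bigr.
Qed.

Lemma T3f_left f g h (c : A) (s : t2 A) :
  T3f f g h [seq (c, p.1, p.2) | p <- s] = f c * T2f g h s.
Proof. by rewrite T3f_map /T2f mulr_sumr; apply: eq_bigr => p _ /=; rewrite mulrA. Qed.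

Lemma T3f_right f g h (c : A) (s : t2 A) :
  T3f f g h [seq (p.1, p.2, c) | p <- s] = T2f f g s * h c.
Proof. by rewrite T3f_map /T2f mulr_suml; apply: eq_bigr. Qed.

End Nest.

Section Main.
Variables (k : fieldType) (A : lmodType k) (W : WMBA A).
Local Notation m := (Defs.mul W).
Local Notation ep := (Defs.eps W).
Local Notation EE := (Defs.E W).
Local Notation DD := (Defs.Delta W).
Implicit Types (f g h : A -> k).

Let hep : lfun ep := eps_lin W.
Let frL f t : lfun f -> lfun (fr m f t) := @lfun_fr _ _ _ (mul_linl W) f t.
Let flL f t : lfun f -> lfun (fl m t f) := @lfun_fl _ _ _ (mul_linr W) f t.
Let ND3r := nondeg3r (mul_linl W) (@nondeg_r _ _ W).
Let ND3l := nondeg3l (mul_linr W) (@nondeg_l _ _ W).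

Lemma left3 b x a f g h : lfun f -> lfun g -> lfun h ->
  T3f f g h (flatten [seq [seq (p.1, q.1, q.2) | q <- EE.1 (p.2, a)] | p <- T2 W b x]) =
  T3f f g h (flatten [seq [seq (p.1, p.2, q.2) | p <- T2 W b q.1] | q <- EE.1 (x, a)]).
Proof.
move=> hf hg hh; apply: ND3r hf hg hh => t F G H hF hG hH.
have hF1 := frL t.1.1 hF; have hG1 := frL t.1.2 hG; have hH1 := frL t.2 hH.
have hbF := flL b hF.
rewrite (T3f_nest1 _ (fun p => p.1) (fun p => EE.1 (p.2, a))).
rewrite (T3f_nest2 _ (fun q => q.2) (fun q => T2 W b q.1)).
pose psi := fun y => T2f G H (EE.1 (y, m a t.2)).
have hpsi : lfun psi by have [b1 _] := bilE1 W hG hH; exact: b1.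
transitivity (T2f (fr m F t.1.1) (fr m psi t.1.2) (T2 W b x)).
  rewrite [in RHS]/T2f; apply: eq_bigr => p _; congr (_ * _).
  exact: (Eright W (t.1.2, t.2) _ _ hG hH).
rewrite (T2ax W b x t.1 hF hpsi).
pose T3' := T3f (fl m b F) G H.
pose Z := [seq (p.1, p.2, m a t.2) | p <- (DD x).1 t.1].
pose phi := fun u v w => fl m b F u * T2f G H (EE.1 (v, w)).
have e1 : T2f (fl m b F) psi ((DD x).1 t.1) = \sum_(p <- Z) phi p.1.1 p.1.2 p.2.
  by rewrite big_map.
have trphi : tril phi.
  have [b1 b2] := bilE1 W hG hH.
  split.
  - by move=> v w c u u'; rewrite /phi hbF mulrDl mulrA.
  - by move=> u w c v v'; rewrite /phi /= b1 mulrDr mulrCA.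
  - by move=> u v c w w'; rewrite /phi /= b2 mulrDr mulrCA.
have eqZ : eq3 Z (ext3 (Eox1 EE).1 Z).
  move=> f' g' h' hf' hg' hh'.
  rewrite -/(T3f f' g' h' _) -/(T3f f' g' h' _) T3f_right T3f_ext3.
  rewrite -(EDelta1 W x t.1 hf' hg') T2f_ext2 mulr_suml.
  by rewrite big_map; apply: eq_bigr => -[p1 p2] _; rewrite T3f_right.
have e2 := U3 eqZ trphi.
have e3 : \sum_(p <- ext3 (Eox1 EE).1 Z) phi p.1.1 p.1.2 p.2 =
          \sum_(p <- Z) T3' (ext3 (oneoxE EE).1 ((Eox1 EE).1 p)).
  rewrite big_flatten /= big_map; apply: eq_bigr => p _.
  by rewrite /T3' T3f_ext3; apply: eq_bigr => q _; rewrite T3f_left.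
have e4 : \sum_(p <- Z) T3' (ext3 (oneoxE EE).1 ((Eox1 EE).1 p)) =
          \sum_(p <- Z) T3' (ext3 (Eox1 EE).1 ((oneoxE EE).1 p)).
  apply: eq_bigr => p _; symmetry.
  exact: ((ax_v_comm W) p).1 _ _ _ hbF hG hH.
have e5 : \sum_(p <- Z) T3' (ext3 (Eox1 EE).1 ((oneoxE EE).1 p)) =
          T3' ((mulM3 (mulM3 (Eox1 EE) (oneoxE EE)) (DoxId m DD [:: (x, a)])).1 t).
  by rewrite /T3' /= cats0 T3f_ext3.
have e6 : T3' ((mulM3 (mulM3 (Eox1 EE) (oneoxE EE)) (DoxId m DD [:: (x, a)])).1 t) =
          T3' ((DoxId m DD (EE.1 (x, a))).1 t).
  have [_ [_ [H1 _]]] := ax_v_Did W.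
  by rewrite -(ext2_1 EE.1 (x, a)); exact: ((H1 [:: (x, a)]) t).1 _ _ _ hbF hG hH.
rewrite e1 e2 e3 e4 e5 e6 /T3'.
rewrite (T3f_nest2 _ (fun q => m q.2 t.2) (fun q => (DD q.1).1 t.1)).
by apply: eq_bigr => q _; rewrite (T2ax W b q.1 t.1 hF hG).
Qed.

Lemma right3 b x a f g h : lfun f -> lfun g -> lfun h ->
  T3f f g h (flatten [seq [seq (p.1, q.1, q.2) | q <- T1 W p.2 a] | p <- EE.2 (b, x)]) =
  T3f f g h (flatten [seq [seq (p.1, p.2, q.2) | p <- EE.2 (b, q.1)] | q <- T1 W x a]).
Proof.
move=> hf hg hh; apply: ND3l hf hg hh => t F G H hF hG hH.
have hF1 := flL t.1.1 hF; have hG1 := flL t.1.2 hG; have hH1 := flL t.2 hH.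
have hHa := frL a hH.
rewrite (T3f_nest1 _ (fun p => p.1) (fun p => T1 W p.2 a)).
rewrite (T3f_nest2 _ (fun q => q.2) (fun q => EE.2 (b, q.1))).
pose T3'' := T3f F G (fr m H a).
pose Z := [seq (m t.1.1 b, p.1, p.2) | p <- (DD x).2 (t.1.2, t.2)].
pose phi := fun u v w => T2f F G (EE.2 (u, v)) * fr m H a w.
have [b1 b2] := bilE2 W hF hG.
have trphi : tril phi.
  split.
  - by move=> v w c u u'; rewrite /phi /= b1 mulrDl mulrA.
  - by move=> u w c v v'; rewrite /phi /= b2 mulrDl mulrA.
  - by move=> u v c w w'; rewrite /phi hHa mulrDr mulrCA.
have e1 : \sum_(p <- EE.2 (b, x)) fl m t.1.1 F p.1 * T2f (fl m t.1.2 G) (fl m t.2 H) (T1 W p.2 a)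
   = T3'' ((idoxD m DD (EE.2 (b, x))).2 t).
  rewrite /T3'' /= (T3f_nest1 _ (fun q => m t.1.1 q.1) (fun q => (DD q.2).2 (t.1.2, t.2))).
  by apply: eq_bigr => p _; rewrite (T1ax W p.2 a (t.1.2, t.2) hG hH).
have e2 : T3'' ((idoxD m DD (EE.2 (b, x))).2 t) =
          T3'' ((mulM3 (idoxD m DD [:: (b, x)]) (mulM3 (Eox1 EE) (oneoxE EE))).2 t).
  have [_ [_ [_ H2]]] := ax_v_idD W.
  symmetry; rewrite -(ext2_1 EE.2 (b, x)).
  exact: ((H2 [:: (b, x)]) t).2 _ _ _ hF hG hHa.
have e3 : T3'' ((mulM3 (idoxD m DD [:: (b, x)]) (mulM3 (Eox1 EE) (oneoxE EE))).2 t) =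
          \sum_(p <- Z) T3'' (ext3 (oneoxE EE).2 ((Eox1 EE).2 p)).
  by rewrite /T3'' /= cats0 T3f_ext3.
have e4 : \sum_(p <- Z) T3'' (ext3 (oneoxE EE).2 ((Eox1 EE).2 p)) =
          \sum_(p <- Z) T3'' (ext3 (Eox1 EE).2 ((oneoxE EE).2 p)).
  apply: eq_bigr => p _.
  exact: ((ax_v_comm W) p).2 _ _ _ hF hG hHa.
have e5 : \sum_(p <- Z) T3'' (ext3 (Eox1 EE).2 ((oneoxE EE).2 p)) =
          \sum_(p <- ext3 (oneoxE EE).2 Z) phi p.1.1 p.1.2 p.2.
  transitivity (\sum_(p <- Z) \sum_(q <- (oneoxE EE).2 p) phi q.1.1 q.1.2 q.2);
    last by rewrite /ext3 big_flatten !big_map.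
  apply: eq_bigr => p _.
  by rewrite /T3'' T3f_ext3; apply: eq_bigr => -[[q1 q2] q3] _; rewrite T3f_right.
have eqZ : eq3 (ext3 (oneoxE EE).2 Z) Z.
  move=> f' g' h' hf' hg' hh'.
  rewrite -/(T3f f' g' h' _) -/(T3f f' g' h' _) T3f_left T3f_ext3.
  rewrite -(EDelta2 W x (t.1.2, t.2) hg' hh') T2f_ext2 mulr_sumr.
  by rewrite big_map; apply: eq_bigr => -[p1 p2] _; rewrite T3f_left.
rewrite e1 e2 e3 e4 e5 (U3 eqZ trphi) big_map.
pose chi := fun v => T2f F G (EE.2 (m t.1.1 b, v)).
have hchi : lfun chi by exact: b2.
transitivity (T2f chi (fr m H a) ((DD x).2 (t.1.2, t.2))); first by [].
rewrite -(T1ax W x a (t.1.2, t.2) hchi hH) [in LHS]/T2f.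
apply: eq_bigr => q _; congr (_ * _).
symmetry; exact: (Eleft W (t.1.1, t.1.2) _ _ hF hG).
Qed.

End Main.


Lemma g_ideps (k : fieldType) (A : lmodType k) (e g : A -> k) s :
  lfun g -> g (ideps e s) = T2f g e s.
Proof. by move=> hg; rewrite /ideps lfun_comb //; apply: eq_bigr => p _; rewrite mulrC. Qed.
Lemma g_epsid (k : fieldType) (A : lmodType k) (e g : A -> k) s :
  lfun g -> g (epsid e s) = T2f e g s.
Proof. by move=> hg; rewrite /epsid lfun_comb. Qed.

Theorem lemma3p5 (k : fieldType) (A : lmodType k) (W : WMBA A) (a b : A) :
  mulM1 (PiR W a) (PiL W b) = mulM1 (PiL W b) (PiR W a).
Proof.
have hep := eps_lin W.
rewrite /mulM1 /PiR /PiL /=; congr (_, _); apply: funext => x; apply: sepeq => g hg.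
- rewrite g_ideps // g_epsid //.
  pose psi := fun y => T2f g (eps W) ((E W).1 (y, a)).
  have hpsi : lfun psi by have [b1 _] := bilE1 W hg hep; exact: b1.
  pose chi := fun y => T2f (eps W) g (T2 W b y).
  have hchi : lfun chi by exact: T2lin.
  change (psi (epsid (eps W) (T2 W b x)) = chi (ideps (eps W) ((E W).1 (x, a)))).
  rewrite /epsid /ideps !lfun_comb //.
  transitivity (T3f (eps W) g (eps W)
     (flatten [seq [seq (p.1, q.1, q.2) | q <- (E W).1 (p.2, a)] | p <- T2 W b x])).
    by rewrite (T3f_nest1 _ (fun p => p.1) (fun p => (E W).1 (p.2, a))).
  rewrite left3 // (T3f_nest2 _ (fun q => q.2) (fun q => T2 W b q.1)).
  by apply: eq_bigr => q _; rewrite mulrC.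
- rewrite g_ideps // g_epsid //.
  pose psi := fun y => T2f g (eps W) (T1 W y a).
  have hpsi : lfun psi by exact: T1lin.
  pose chi := fun y => T2f (eps W) g ((E W).2 (b, y)).
  have hchi : lfun chi by have [_ b2] := bilE2 W hep hg; exact: b2.
  change (chi (ideps (eps W) (T1 W x a)) = psi (epsid (eps W) ((E W).2 (b, x)))).
  rewrite /epsid /ideps !lfun_comb //.
  transitivity (T3f (eps W) g (eps W)
     (flatten [seq [seq (p.1, q.1, q.2) | q <- T1 W p.2 a] | p <- (E W).2 (b, x)])); last first.
    by rewrite (T3f_nest1 _ (fun p => p.1) (fun p => T1 W p.2 a)).
  rewrite right3 // (T3f_nest2 _ (fun q => q.2) (fun q => (E W).2 (b, q.1))).
  by apply: eq_bigr => q _; rewrite mulrC.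
Qed.
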